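(* Let $K$ be a ramified quadratic extension of $\mathbb{Q}_2$ with ring of integers $\mathcal{O}$ and uniformizer $\pi$ as specified in the context, and let $d=2m$ with $m$ odd, $m\ge3$. Let $r\ge 0$ be an integer. (1) If $a_1=\pi^r u_1$, $a_2=\pi^r u_2$ with $u_1,u_2$ units whose $\pi$-coefficients differ, then for each $e\in\{0,1\}$ there exist units $b_1,b_2\in\mathcal{O}$ with $a_1b_1^d+a_2b_2^d=\pi^{r+1}w$, where $w$ is a unit with $\pi$-coefficient $e$. (2) If $a_1=\pi^r u_1$, $a_2=\pi^r u_2$ with $u_1,u_2$ units having the same $\pi$-coefficient, then there exist units $b_1,b_2\in\mathcal{O}$ with $\mathrm{ord}_\pi(a_1b_1^d+a_2b_2^d)=r+2$. (3) Under the hypothesis of (2), there exist units $b_1,b_2\in\mathcal{O}$ with $\mathrm{ord}_\pi(a_1b_1^d+a_2b_2^d)\ge r+3$ (where $\mathrm{ord}_\pi(0)=\infty$). (4) Suppose $K\in\{\mathbb{Q}_2(\sqrt{-1}),\mathbb{Q}_2(\sqrt{-5})\}$. If $a_1,a_2,a_3$ are of the form $a_i=\pi^r u_i$ with units $u_i$ all having the same $\pi$-coefficient, then there are indices $i\neq j$ in $\{1,2,3\}$ and units $b_i,b_j\in\mathcal{O}$ with $\mathrm{ord}_\pi(a_ib_i^d+a_jb_j^d)\ge r+4$. (5) Suppose $K\in\{\mathbb{Q}_2(\sqrt{2}),\mathbb{Q}_2(\sqrt{10}),\mathbb{Q}_2(\sqrt{-2}),\mathbb{Q}_2(\sqrt{-10})\}$.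 If $a_1,a_2,a_3$ are of the form $a_i=\pi^r u_i$ with units $u_i$ all having the same $\pi$-coefficient $c$, then there are indices $i\neq j$ in $\{1,2,3\}$ and units $b_i,b_j\in\mathcal{O}$ with $a_ib_i^d+a_jb_j^d=\pi^{r+2}w$, where $w$ is a unit whose $\pi$-coefficient is $c$.
   Context: $K$ is one of the six ramified quadratic extensions of $\mathbb{Q}_2$, with uniformizer $\pi$ chosen as follows: $\pi=\sqrt{2}$ for $\mathbb{Q}_2(\sqrt2)$, $\pi=\sqrt{-2}$ for $\mathbb{Q}_2(\sqrt{-2})$, $\pi=\sqrt{10}$ for $\mathbb{Q}_2(\sqrt{10})$, $\pi=\sqrt{-10}$ for $\mathbb{Q}_2(\sqrt{-10})$, $\pi=1+\sqrt{-1}$ for $\mathbb{Q}_2(\sqrt{-1})$, $\pi=1+\sqrt{-5}$ for $\mathbb{Q}_2(\sqrt{-5})$. Every unit $u\in\mathcal{O}$ has a unique expansion $u=c_0+c_1\pi+c_2\pi^2+\cdots$ with all $c_k\in\{0,1\}$ and $c_0=1$; $c_1$ is called the $\pi$-coefficient of $u$. *)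

(* Defs.v *)
(* Concrete model of the ring of integers O of the six
   ramified quadratic extensions K = Q_2(sqrt D) of Q_2.  In all six cases
   D = 2,-2,10,-10,-1,-5 one has O = Z_2[sqrt D], and we realise
   O = lim_n Z[sqrt D] / 2^n Z[sqrt D]  as coherent sequences of
   pairs (a_n, b_n) of integers, (a_n, b_n) standing for a_n + b_n sqrt D
   modulo 2^n. *)
From mathcomp Require Import all_boot all_order all_algebra.
Set Implicit Arguments. Unset Strict Implicit. Unset Printing Implicit Defensive.
Import GRing.Theory Num.Theory.
Local Open Scope ring_scope.

Inductive ramK := Q2sqrt2 | Q2sqrtm2 | Q2sqrt10 | Q2sqrtm10 | Q2sqrtm1 | Q2sqrtm5.

Definition radicand (K : ramK) : int :=
  match K with
  | Q2sqrt2 => 2 | Q2sqrtm2 => -2 | Q2sqrt10 => 10 | Q2sqrtm10 => -10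
  | Q2sqrtm1 => -1 | Q2sqrtm5 => -5
  end.

Definition Oseq := nat -> (int * int)%type.

Definition congr2 (n : nat) (x y : int * int) : Prop :=
  (x.1 = y.1 %[mod (2 ^+ n : int)])%Z /\ (x.2 = y.2 %[mod (2 ^+ n : int)])%Z.

Definition isO (x : Oseq) : Prop := forall n, congr2 n (x n.+1) (x n).

Definition eqO (x y : Oseq) : Prop := forall n, congr2 n (x n) (y n).

Definition constO (a b : int) : Oseq := fun _ => (a, b).
Definition zeroO : Oseq := constO 0 0.
Definition oneO : Oseq := constO 1 0.
Definition addO (x y : Oseq) : Oseq := fun n => ((x n).1 + (y n).1, (x n).2 + (y n).2).
Definition oppO (x : Oseq) : Oseq := fun n => (- (x n).1, - (x n).2).
Definition subO (x y : Oseq) : Oseq := addO x (oppO y).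
Definition mulO (K : ramK) (x y : Oseq) : Oseq := fun n =>
  ((x n).1 * (y n).1 + radicand K * ((x n).2 * (y n).2),
   (x n).1 * (y n).2 + (x n).2 * (y n).1).
Definition expO (K : ramK) (x : Oseq) (k : nat) : Oseq := iter k (mulO K x) oneO.

Definition piO (K : ramK) : Oseq :=
  match K with
  | Q2sqrtm1 | Q2sqrtm5 => constO 1 1
  | _ => constO 0 1
  end.

Definition unitO (K : ramK) (u : Oseq) : Prop :=
  isO u /\ exists v, isO v /\ eqO (mulO K u v) oneO.

(* pi^k divides x in O, i.e. ord_pi x >= k (ord_pi 0 = infinity) *)
Definition ord_ge (K : ramK) (x : Oseq) (k : nat) : Prop :=
  exists y, isO y /\ eqO x (mulO K (expO K (piO K) k) y).

Definition ord_eq (K : ramK) (x : Oseq) (k : nat) : Prop :=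
  ord_ge K x k /\ ~ ord_ge K x k.+1.

Definition digitO (c : bool) : Oseq := if c then oneO else zeroO.

Definition psumO (K : ramK) (c : nat -> bool) (N : nat) : Oseq :=
  foldr (fun k acc => addO (mulO K (digitO (c k)) (expO K (piO K) k)) acc)
        zeroO (iota 0 N).

(* u = c_0 + c_1 pi + c_2 pi^2 + ... with c_k in {0,1}, c_0 = 1, and
   c_1 = e :  e is the pi-coefficient of the unit u *)
Definition pi_coeff (K : ramK) (u : Oseq) (e : bool) : Prop :=
  exists c : nat -> bool, c 0%N = true /\ c 1%N = e /\
    forall N, ord_ge K (subO u (psumO K c N)) N.

Definition binform (K : ramK) (d : nat) (a1 b1 a2 b2 : Oseq) : Oseq :=
  addO (mulO K a1 (expO K b1 d)) (mulO K a2 (expO K b2 d)).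

(* Main.v *)
Require Import Defs.
From mathcomp Require Import all_boot all_order all_algebra.
From HB Require Import structures.
From mathcomp Require Import ring lra zify.
Set Implicit Arguments. Unset Strict Implicit. Unset Printing Implicit Defensive.
Import GRing.Theory Num.Theory.
Local Open Scope ring_scope.
Definition ZD (K : ramK) := (int * int)%type.
HB.instance Definition _ (K : ramK) := Choice.copy (ZD K) (int * int)%type.

Section ZDring.
Variable K : ramK.
Local Notation D := (radicand K).
Definition zd0 : ZD K := (0, 0).
Definition zdadd (x y : ZD K) : ZD K := (x.1 + y.1, x.2 + y.2).
Definition zdopp (x : ZD K) : ZD K := (- x.1, - x.2).
Definition zd1 : ZD K := (1, 0).
Definition zdmul (x y : ZD K) : ZD K := (x.1 * y.1 + D * (x.2 * y.2), x.1 * y.2 + x.2 * y.1).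
Lemma zdaddA : associative zdadd. Proof. by move=> [a b] [c d] [e f]; rewrite /zdadd /= !addrA. Qed.
Lemma zdaddC : commutative zdadd. Proof. by move=> [a b] [c d]; rewrite /zdadd /= addrC (addrC b). Qed.
Lemma zdadd0 : left_id zd0 zdadd. Proof. by move=> [a b]; rewrite /zdadd /= !add0r. Qed.
Lemma zdaddN : left_inverse zd0 zdopp zdadd. Proof. by move=> [a b]; rewrite /zdadd /= !addNr. Qed.
HB.instance Definition _ := GRing.isZmodule.Build (ZD K) zdaddA zdaddC zdadd0 zdaddN.
Lemma zdmulA : associative zdmul.
Proof. by move=> [a b] [c d] [e f]; rewrite /zdmul /=; congr pair; ring. Qed.
Lemma zdmulC : commutative zdmul.
Proof. by move=> [a b] [c d]; rewrite /zdmul /=; congr pair; ring. Qed.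
Lemma zdmul1 : left_id zd1 zdmul.
Proof. by move=> [a b]; rewrite /zdmul /=; congr pair; ring. Qed.
Lemma zdmulD : left_distributive zdmul zdadd.
Proof. by move=> [a b] [c d] [e f]; rewrite /zdmul /zdadd /=; congr pair; ring. Qed.
Lemma zd10 : zd1 != 0. Proof. by []. Qed.
HB.instance Definition _ := GRing.Zmodule_isComNzRing.Build (ZD K) zdmulA zdmulC zdmul1 zdmulD zd10.
End ZDring.


Lemma mulE K (x y : ZD K) : x * y = zdmul x y. Proof. by []. Qed.
Lemma addE K (x y : ZD K) : x + y = zdadd x y. Proof. by []. Qed.
Lemma oppE K (x : ZD K) : - x = zdopp x. Proof. by []. Qed.

Definition sc K (c : int) : ZD K := (c, 0).
Definition normZ K (z : ZD K) : int := z.1 ^+ 2 - radicand K * z.2 ^+ 2.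
Definition conjZ K (z : ZD K) : ZD K := (z.1, - z.2).
Definition D2 K (n : nat) (z : ZD K) : bool :=
  (2 ^+ n %| z.1)%Z && (2 ^+ n %| z.2)%Z.

Lemma scM K a b : sc K (a * b) = sc K a * sc K b.
Proof. by rewrite /sc; congr pair; rewrite /= ?mulr0 ?addr0 ?mul0r. Qed.
Lemma scD K a b : sc K (a + b) = sc K a + sc K b.
Proof. by rewrite /sc [RHS]/(_ + _) /= /zdadd /= addr0. Qed.
Lemma sc1 K : sc K 1 = 1. Proof. by []. Qed.
Lemma scX K a k : sc K (a ^+ k) = sc K a ^+ k.
Proof. elim: k => [|k IH]; first by []. by rewrite !exprS scM IH. Qed.
Lemma scMz K c (z : ZD K) : sc K c * z = (c * z.1, c * z.2).
Proof. case: z => a b; rewrite mulE /sc /= /zdmul /=; congr pair; ring. Qed.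
Lemma conjM K (z : ZD K) : z * conjZ z = sc K (normZ z).
Proof. case: z => a b; rewrite mulE /sc /= /zdmul /normZ /=; congr pair; ring. Qed.
Lemma normM K (x y : ZD K) : normZ (x * y) = normZ x * normZ y.
Proof. case: x y => a b [c d]; rewrite mulE /normZ /= /zdmul /=; ring. Qed.
Lemma normB K (x y : ZD K) :
  normZ (x - y) = normZ x + normZ y - 2 * (x.1 * y.1 - radicand K * (x.2 * y.2)).
Proof. case: x y => a b [c d]; rewrite /normZ /=; ring. Qed.
Lemma fst_add K (x y : ZD K) : (x + y).1 = x.1 + y.1. Proof. by []. Qed.
Lemma snd_add K (x y : ZD K) : (x + y).2 = x.2 + y.2. Proof. by []. Qed.
Lemma fst_opp K (x : ZD K) : (- x).1 = - x.1. Proof. by []. Qed.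
Lemma snd_opp K (x : ZD K) : (- x).2 = - x.2. Proof. by []. Qed.
Lemma fst_mul K (x y : ZD K) : (x * y).1 = x.1 * y.1 + radicand K * (x.2 * y.2). Proof. by []. Qed.
Lemma snd_mul K (x y : ZD K) : (x * y).2 = x.1 * y.2 + x.2 * y.1. Proof. by []. Qed.

Lemma D2_0 K (z : ZD K) : D2 0 z. Proof. by rewrite /D2 !dvd1z. Qed.
Lemma D2z K n : D2 n (0 : ZD K). Proof. by rewrite /D2 !dvdz0. Qed.
Lemma D2D K n (x y : ZD K) : D2 n x -> D2 n y -> D2 n (x + y).
Proof. by case/andP=> h1 h2 /andP[h3 h4]; rewrite /D2 rpredD // rpredD. Qed.
Lemma D2N K n (x : ZD K) : D2 n x -> D2 n (- x).
Proof. by case/andP=> h1 h2; rewrite /D2 rpredN h1 rpredN. Qed.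
Lemma D2B K n (x y : ZD K) : D2 n x -> D2 n y -> D2 n (x - y).
Proof. by move=> h1 h2; apply: D2D => //; apply: D2N. Qed.
Lemma D2Mr K n (x y : ZD K) : D2 n x -> D2 n (x * y).
Proof.
case/andP=> h1 h2; rewrite /D2 fst_mul snd_mul.
apply/andP; split; apply: rpredD.
- exact: dvdz_mulr.
- apply: dvdz_mull; exact: dvdz_mulr.
- exact: dvdz_mulr.
- exact: dvdz_mulr.
Qed.
Lemma D2Ml K n (x y : ZD K) : D2 n y -> D2 n (x * y).
Proof. by rewrite mulrC; apply: D2Mr. Qed.
Lemma D2_le K m n (z : ZD K) : (m <= n)%N -> D2 n z -> D2 m z.
Proof.
move=> mn /andP[h1 h2]; have h := dvdz_exp2l 2 mn.
by rewrite /D2 (dvdz_trans h h1) (dvdz_trans h h2).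
Qed.
Lemma D2_sc K m k (z : ZD K) : D2 m z -> D2 (k + m) (sc K (2 ^+ k) * z).
Proof.
case/andP=> h1 h2; rewrite scMz /D2 /= exprD.
by rewrite !dvdz_mul.
Qed.
Lemma D2_sc_inv K m k (z : ZD K) : D2 (k + m) (sc K (2 ^+ k) * z) -> D2 m z.
Proof.
rewrite scMz /D2 /= exprD.
have nz : (2 ^+ k : int) != 0 by rewrite expf_neq0.
by rewrite !dvdz_mul2l.
Qed.
Lemma sc_inj K c (x y : ZD K) : c != 0 -> sc K c * x = sc K c * y -> x = y.
Proof.
move=> nz; rewrite !scMz; case: x y => a b [a' b'] /= [h1 h2].
by rewrite (mulfI nz h1) (mulfI nz h2).
Qed.
Lemma D2_sqsc K n : D2 n (sc K (2 ^+ n)).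
Proof. by rewrite /D2 /= dvdzz dvdz0. Qed.

Lemma congr2E K n (x y : ZD K) : Defs.congr2 n x y <-> D2 n (x - y).
Proof.
rewrite /Defs.congr2 /D2 fst_add snd_add fst_opp snd_opp.
split.
  by case=> h1 h2; rewrite -!eqz_mod_dvd h1 h2 !eqxx.
by case/andP; rewrite -!eqz_mod_dvd => /eqP h1 /eqP h2.
Qed.

Definition ev K (x : Oseq) n : ZD K := x n.
Definition piC (K : ramK) : ZD K :=
  match K with Q2sqrtm1 | Q2sqrtm5 => (1, 1) | _ => (0, 1) end.
Definition pcC (K : ramK) : ZD K :=
  match K with Q2sqrtm1 | Q2sqrtm5 => (1, -1) | _ => (0, -1) end.
Definition tK (K : ramK) : int :=
  match K with Q2sqrt2 => -1 | Q2sqrtm2 => 1 | Q2sqrt10 => -5 | Q2sqrtm10 => 5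
  | Q2sqrtm1 => 1 | Q2sqrtm5 => 3 end.

Lemma evA K x y n : ev K (addO x y) n = ev K x n + ev K y n. Proof. by []. Qed.
Lemma evN K x n : ev K (oppO x) n = - ev K x n. Proof. by []. Qed.
Lemma evB K x y n : ev K (subO x y) n = ev K x n - ev K y n. Proof. by []. Qed.
Lemma evM K x y n : ev K (mulO K x y) n = ev K x n * ev K y n. Proof. by []. Qed.
Lemma evX K x k n : ev K (expO K x k) n = ev K x n ^+ k.
Proof. elim: k => [|k IH] //; by rewrite exprS -IH. Qed.
Lemma evC K a b n : ev K (constO a b) n = (a, b). Proof. by []. Qed.
Lemma ev1 K n : ev K oneO n = 1. Proof. by []. Qed.
Lemma ev0 K n : ev K zeroO n = 0. Proof. by []. Qed.
Lemma evpi K n : ev K (piO K) n = piC K. Proof. by case: K. Qed.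
Definition dZ K (b : bool) : ZD K := if b then 1 else 0.
Lemma evdig K b n : ev K (digitO b) n = dZ K b. Proof. by case: b. Qed.
Definition evE := (evA, evN, evB, evM, evX, evC, ev1, ev0, evpi, evdig).

Lemma pi_pc K : piC K * pcC K = sc K (2 * tK K). Proof. by case: K. Qed.
Lemma tK_odd K : ~~ (2 %| tK K)%Z. Proof. by case: K. Qed.

Lemma eqOE K x y : eqO x y <-> forall n, D2 n (ev K x n - ev K y n).
Proof. by split=> h n; apply/(congr2E (K:=K)); apply: h. Qed.
Lemma isOE K x : isO x <-> forall n, D2 n (ev K x n.+1 - ev K x n).
Proof. by split=> h n; apply/(congr2E (K:=K)); apply: h. Qed.

Lemma eqO_pt K x y : (forall n, ev K x n = ev K y n) -> eqO x y.
Proof. by move=> h; apply/(eqOE K) => n; rewrite h subrr D2z. Qed.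
Lemma eqO_sym (K : ramK) x y : eqO x y -> eqO y x.
Proof.
move/(eqOE K)=> h; apply/(eqOE K) => n.
by rewrite -opprB; apply: D2N.
Qed.
Lemma eqO_trans (K : ramK) x y z : eqO x y -> eqO y z -> eqO x z.
Proof.
move/(eqOE K)=> h1 /(eqOE K) h2; apply/(eqOE K) => n.
by rewrite -(subrK (ev K y n) (ev K x n)) -addrA; apply: D2D.
Qed.

Lemma isO_le K x m n : isO x -> (m <= n)%N -> D2 m (ev K x n - ev K x m).
Proof.
move/(isOE K)=> h; elim: n => [|n IH].
  by rewrite leqn0 => /eqP ->; rewrite subrr D2z.
rewrite leq_eqVlt => /orP [/eqP <-|]; first by rewrite subrr D2z.
rewrite ltnS => mn.
have -> : ev K x n.+1 - ev K x m = (ev K x n.+1 - ev K x n) + (ev K x n - ev K x m) by ring.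
by apply: D2D; [apply: D2_le (h n)| apply: IH].
Qed.

Lemma isO_const a b : isO (constO a b).
Proof. apply/(isOE Q2sqrt2) => n; by rewrite !evE subrr D2z. Qed.
Lemma isO_add x y : isO x -> isO y -> isO (addO x y).
Proof.
move=> /(isOE Q2sqrt2) h1 /(isOE Q2sqrt2) h2; apply/(isOE Q2sqrt2) => n; rewrite !evE.
have -> : forall a b c d : ZD Q2sqrt2, a + b - (c + d) = (a - c) + (b - d) by move=> *; ring.
exact: D2D.
Qed.
Lemma isO_opp x : isO x -> isO (oppO x).
Proof.
move=> /(isOE Q2sqrt2) h1; apply/(isOE Q2sqrt2) => n; rewrite !evE -opprD; exact: D2N.
Qed.
Lemma isO_sub x y : isO x -> isO y -> isO (subO x y).
Proof. by move=> h1 h2; apply: isO_add => //; apply: isO_opp. Qed.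
Lemma isO_mul K x y : isO x -> isO y -> isO (mulO K x y).
Proof.
move=> /(isOE K) h1 /(isOE K) h2; apply/(isOE K) => n; rewrite !evE.
have -> : forall a b c d : ZD K, a * b - c * d = (a - c) * b + c * (b - d) by move=> *; ring.
by apply: D2D; [apply: D2Mr | apply: D2Ml].
Qed.
Lemma isO_one : isO oneO. Proof. exact: isO_const. Qed.
Lemma isO_exp K x k : isO x -> isO (expO K x k).
Proof. move=> h; elim: k => [|k IH]; [exact: isO_one | exact: isO_mul]. Qed.
Lemma isO_pi K : isO (piO K). Proof. by case: K; apply: isO_const. Qed.
Lemma isO_digit b : isO (digitO b). Proof. by case: b; apply: isO_const. Qed.

Lemma D2_pow1 K n (a : ZD K) k : D2 n (a - 1) -> D2 n (a ^+ k - 1).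
Proof.
move=> h; elim: k => [|k IH]; first by rewrite expr0 subrr D2z.
have -> : a ^+ k.+1 - 1 = a * (a ^+ k - 1) + (a - 1) by rewrite exprS; ring.
by apply: D2D => //; apply: D2Ml.
Qed.

Lemma oddpow (a : int) k : ~~ (2 %| a)%Z -> (2 ^+ k.+1 %| (a ^+ (2 ^ k) - 1)%R)%Z.
Proof.
move=> ha; elim: k => [|k IH]; first by rewrite expr1 expn0 expr1; lia.
rewrite expnS mulnC exprM.
have -> : (a ^+ (2 ^ k)%N) ^+ 2 - 1 = (a ^+ (2 ^ k)%N - 1) * (a ^+ (2 ^ k)%N + 1) by ring.
rewrite [2 ^+ _]exprS mulrC; apply: dvdz_mul => //.
have h2 : (2 %| (a ^+ (2 ^ k)%N - 1)%R)%Z.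
  by apply: dvdz_trans IH; exact: (dvdz_exp2l 2 (isT : (1 <= k.+1)%N)).
move: h2; set X := a ^+ (2 ^ k)%N; lia.
Qed.

Lemma scB K a b : sc K (a - b) = sc K a - sc K b.
Proof. by rewrite /sc oppE addE /zdadd /zdopp /= oppr0 addr0. Qed.

Definition invO K (x : Oseq) : Oseq := fun n =>
  conjZ (ev K x n) * sc K (normZ (ev K x n) ^+ (2 ^ n).-1).

Lemma inv_spec K x n : ~~ (2 %| normZ (ev K x n))%Z ->
  D2 n (ev K x n * ev K (invO K x) n - 1).
Proof.
move=> hN; rewrite /ev /invO mulrA -/(ev K x n) conjM -scM -exprS prednK ?expn_gt0 //.
rewrite -sc1 -scB /D2 /= dvdz0 andbT.
apply: dvdz_trans (oddpow n hN); apply: dvdz_exp2l; exact: leqnSn.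
Qed.

Lemma isO_inv_gen K x v : isO x -> (forall n, D2 n (ev K x n * ev K v n - 1)) -> isO v.
Proof.
move=> /(isOE K) hx hv; apply/(isOE K) => n.
set x' := ev K x n.+1; set xx := ev K x n; set v' := ev K v n.+1; set vv := ev K v n.
have -> : v' - vv = - (v' * (xx * vv - 1)) + vv * (- (x' - xx) * v' + (x' * v' - 1)) by ring.
apply: D2D; first by apply: D2N; apply: D2Ml; apply: hv.
apply: D2Ml; apply: D2D; first by apply: D2Mr; apply: D2N; apply: hx.
by apply: D2_le (hv n.+1).
Qed.

Lemma unit_of K x : isO x -> (forall n, ~~ (2 %| normZ (ev K x n))%Z) -> unitO K x.
Proof.
move=> hx hN; have hv := fun n => inv_spec (hN n).
split=> //; exists (invO K x); split; first exact: isO_inv_gen hx hv.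
by apply/(eqOE K) => n; rewrite evE ev1; apply: hv.
Qed.

Lemma oddM (a b : int) : ~~ (2 %| a)%Z -> ~~ (2 %| b)%Z -> ~~ (2 %| a * b)%Z.
Proof. by rewrite !dvdzE abszM Euclid_dvdM // => /negPf -> /negPf ->. Qed.

Definition halfs K s (z : ZD K) : ZD K := ((z.1 %/ 2 ^+ s)%Z, (z.2 %/ 2 ^+ s)%Z).
Lemma halfsK K s (z : ZD K) : D2 s z -> sc K (2 ^+ s) * halfs s z = z.
Proof.
case/andP=> h1 h2; rewrite scMz /halfs /= ![2 ^+ s * _]mulrC !divzK //.
by case: z h1 h2.
Qed.

Lemma normsc K t : normZ (sc K t) = t * t. Proof. rewrite /normZ /=; ring. Qed.

Definition tinvO K : Oseq := locked (invO K (constO (tK K) 0)).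
Lemma tinv_isO K : isO (tinvO K).
Proof.
have hN : forall n, ~~ (2 %| normZ (ev K (constO (tK K) 0) n))%Z.
  by move=> n; rewrite evC; change (~~ (2 %| normZ (sc K (tK K)))%Z); rewrite normsc; apply: oddM; apply: tK_odd.
rewrite /tinvO -lock.
apply: (isO_inv_gen (K:=K) (isO_const _ _)) => n; exact: inv_spec.
Qed.
Lemma tinv_spec K n : D2 n (sc K (tK K) * ev K (tinvO K) n - 1).
Proof.
rewrite /tinvO -lock.
have := @inv_spec K (constO (tK K) 0) n; rewrite evC; apply.
by change (~~ (2 %| normZ (sc K (tK K)))%Z); rewrite normsc; apply: oddM; apply: tK_odd.
Qed.

Definition HsO K s (X : Oseq) : Oseq := fun n => halfs s (pcC K ^+ s * ev K X (n + s)).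
Definition divO K s X := locked (mulO K (expO K (tinvO K) s) (HsO K s X)).

Lemma divO_spec K s X : isO X -> (forall n, D2 s (pcC K ^+ s * ev K X (n + s))) ->
  isO (divO K s X) /\ eqO X (mulO K (expO K (piO K) s) (divO K s X)).
Proof.
move=> hX hD; rewrite /divO -lock.
have hH : forall n, sc K (2 ^+ s) * ev K (HsO K s X) n = pcC K ^+ s * ev K X (n + s).
  by move=> n; apply: halfsK.
split.
  apply: isO_mul; first by apply: isO_exp; apply: tinv_isO.
  apply/(isOE K) => n; apply: (@D2_sc_inv K n s).
  rewrite mulrBr !hH -mulrBr; apply: D2Ml.
  have := (isOE K X).1 hX (n + s); rewrite addSn.
  by rewrite addnC.
apply/(eqOE K) => n; rewrite !evE.
have hpi : piC K ^+ s * ev K (HsO K s X) n = sc K (tK K ^+ s) * ev K X (n + s).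
  apply: (@sc_inj K (2 ^+ s)); first by rewrite expf_neq0.
  by rewrite mulrCA hH [LHS]mulrA -exprMn pi_pc -scX mulrA -scM exprMn.
rewrite mulrCA hpi scX mulrA -exprMn.
set a := ev K (tinvO K) n * sc K (tK K).
have -> : ev K X n - a ^+ s * ev K X (n + s) =
  - (ev K X (n + s) - ev K X n) - (a ^+ s - 1) * ev K X (n + s) by ring.
apply: D2B; first by apply: D2N; apply: isO_le => //; apply: leq_addr.
by apply: D2Mr; apply: D2_pow1; rewrite /a mulrC; apply: tinv_spec.
Qed.

Lemma sqpar (a : int) : (2 %| a * a - a)%Z.
Proof.
have : (2 %| a)%Z \/ (2 %| a - 1)%Z by lia.
have -> : a * a - a = a * (a - 1) by ring.
by case=> h; [apply: dvdz_mulr | apply: dvdz_mull].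
Qed.

Lemma normD2 K (p q : ZD K) : D2 1 (p - q) -> (2 %| normZ p - normZ q)%Z.
Proof.
case: p q => a b [c d]; rewrite /D2 /normZ /= expr1 => /andP[h1 h2].
have -> : a ^+ 2 - radicand K * b ^+ 2 - (c ^+ 2 - radicand K * d ^+ 2) =
  (a - c) * (a + c) - radicand K * ((b - d) * (b + d)) by ring.
by apply: rpredB; [apply: dvdz_mulr | apply: dvdz_mull; apply: dvdz_mulr].
Qed.

Lemma even_norm_pc K (z : ZD K) : (2 %| normZ z)%Z -> D2 1 (pcC K * z).
Proof.
case: z => a b; rewrite /normZ /D2 mulE /zdmul /= !expr2 expr1.
have h1 := sqpar a; have h2 := sqpar b.
case: K => /=; move: (a * a) (b * b) h1 h2 => A B h1 h2 h; apply/andP; split; lia.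
Qed.

Definition bitOf K (x : Oseq) : bool := ~~ (2 %| normZ (ev K x 1))%Z.
Definition stepO K x := locked (divO K 1 (subO x (digitO (bitOf K x)))).

Lemma norm1 K : normZ (1 : ZD K) = 1. Proof. rewrite /normZ /=; ring. Qed.

Lemma step_spec K x : isO x ->
  isO (stepO K x) /\ eqO x (addO (digitO (bitOf K x)) (mulO K (piO K) (stepO K x))).
Proof.
move=> hx.
have hX : isO (subO x (digitO (bitOf K x))) by apply: isO_sub => //; apply: isO_digit.
have hc : forall n, D2 1 (pcC K ^+ 1 * ev K (subO x (digitO (bitOf K x))) (n + 1)).
  move=> n; rewrite expr1; apply: even_norm_pc; rewrite evB evdig /dZ.
  have hN := normD2 (isO_le K hx (leq_addl n 1)).
  rewrite /bitOf; case: (boolP (2 %| normZ (ev K x 1))%Z) => hb /=.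
    by rewrite subr0; move: hN hb; set A := normZ _; set B := normZ _; lia.
  rewrite normB norm1 /=; move: hN hb; set A := normZ _; set B := normZ _.
  set C := (_ * _ - _); lia.
have [h1 h2] := divO_spec hX hc.
rewrite /stepO -lock.
split => //; apply/(eqOE K) => n; move/(eqOE K): h2 => /(_ n).
by rewrite !evE expr1; have -> : forall a b c : ZD K, a - b - c = a - (b + c) by move=> *; ring.
Qed.

Lemma psumE_gen K c s N n :
  ev K (foldr (fun k acc => addO (mulO K (digitO (c k)) (expO K (piO K) k)) acc)
        zeroO (iota s N)) n = \sum_(s <= k < s + N) dZ K (c k) * piC K ^+ k.
Proof.
elim: N s => [|N IH] s /=; first by rewrite addn0 big_geq.
by rewrite evA evM evX evdig evpi IH big_ltn ?addnS ?ltnS ?leq_addr.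
Qed.

Lemma psumE K c N n : ev K (psumO K c N) n = \sum_(0 <= k < N) dZ K (c k) * piC K ^+ k.
Proof. exact: psumE_gen. Qed.

Lemma psum_shift K c c' N n : (forall k, c' k = c k.+1) ->
  ev K (psumO K c N.+1) n = dZ K (c 0%N) + piC K * ev K (psumO K c' N) n.
Proof.
move=> hc; rewrite !psumE big_nat_recl // expr0 mulr1 mulr_sumr; congr (_ + _).
by apply: eq_bigr => k _; rewrite hc exprS; ring.
Qed.

Definition xsO K x k := iter k (stepO K) x.
Definition csO K x k := bitOf K (xsO K x k).

Lemma expand K N x : isO x -> isO (xsO K x N) /\
  eqO x (addO (psumO K (csO K x) N) (mulO K (expO K (piO K) N) (xsO K x N))).
Proof.
elim: N x => [|N IH] x hx.
  split => //; apply: (eqO_pt (K:=K)) => n.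
  by rewrite evA psumE big_geq // evM evX expr0 add0r mul1r.
have [hy hxy] := step_spec K hx.
have [hyN hy2] := IH _ hy.
have hxs : xsO K x N.+1 = xsO K (stepO K x) N by rewrite /xsO iterSr.
split; first by rewrite hxs.
apply/(eqOE K) => n; rewrite evA (@psum_shift K _ (csO K (stepO K x))); last first.
  by move=> k; rewrite /csO /xsO iterSr.
move/(eqOE K): hxy => /(_ n); move/(eqOE K): hy2 => /(_ n).
rewrite hxs !evE exprS /csO /xsO /= => h1 h2.
set A := ev K x n; set Y := ev K (stepO K x) n.
move: h1 h2; rewrite -/(csO K (stepO K x)) -/(xsO K (stepO K x) N).
set P := ev K (psumO _ _ _) n; set Z := ev K (xsO _ _ _) n => h1 h2.
have -> : A - (dZ K (bitOf K x) + piC K * P + piC K * piC K ^+ N * Z) =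
  (A - (dZ K (bitOf K x) + piC K * Y)) + piC K * (Y - (P + piC K ^+ N * Z)) by ring.
by apply: D2D => //; apply: D2Ml.
Qed.

Lemma pi_coeff_of K w e Y : isO w -> isO Y ->
  eqO w (addO oneO (mulO K (piO K) (addO (digitO e) (mulO K (piO K) Y)))) ->
  pi_coeff K w e.
Proof.
move=> hw hY hwY.
set c := fun k => match k with 0 => true | 1 => e | k'.+2 => csO K Y k' end.
exists c; split => //; split => // N.
case: N => [|[|M]].
- exists w; split => //; apply: (eqO_pt (K:=K)) => n.
  by rewrite evB psumE big_geq // evM evX expr0 mul1r subr0.
- exists (addO (digitO e) (mulO K (piO K) Y)); split.
    by apply: isO_add; [apply: isO_digit | apply: isO_mul => //; apply: isO_pi].
  apply/(eqOE K) => n; move/(eqOE K): hwY => /(_ n).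
  rewrite evB psumE big_nat1 !evE expr1 expr0 mulr1 /c /dZ /=.
  by have -> : forall a b d : ZD K, a - b - d = a - (b + d) by move=> *; ring.
- have [hx hx2] := expand K M hY.
  exists (xsO K Y M); split => //.
  apply/(eqOE K) => n; move/(eqOE K): hwY => /(_ n); move/(eqOE K): hx2 => /(_ n).
  rewrite evB (@psum_shift K c (fun k => c k.+1)) // (@psum_shift K _ (csO K Y)) //.
  rewrite !evE !exprS /c /= => h2 h1.
  set W := ev K w n; set P := ev K (psumO _ _ _) n; set Z := ev K (xsO _ _ _) n.
  move: h1 h2; rewrite -/W -/P -/Z => h1 h2.
  set Yv := ev K Y n.
  have -> : W - (dZ K true + piC K * (dZ K e + piC K * P)) -
      piC K * (piC K * piC K ^+ M) * Z =
    (W - (1 + piC K * (dZ K e + piC K * Yv))) + (piC K * piC K) * (Yv - (P + piC K ^+ M * Z)).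
    by rewrite /dZ; ring.
  by apply: D2D => //; apply: D2Ml.
Qed.

Lemma oddX (a : int) k : ~~ (2 %| a)%Z -> ~~ (2 %| a ^+ k)%Z.
Proof. move=> h; elim: k => [|k IH]; first by rewrite expr0. by rewrite exprS oddM. Qed.

Lemma normpi K : normZ (piC K) = 2 * tK K. Proof. by case: K. Qed.

Lemma D2_norm K (z : ZD K) : D2 1 z -> (2 %| normZ z)%Z.
Proof.
case: z => a b; rewrite /D2 /normZ /= expr1 !expr2 => /andP[h1 h2].
by apply: rpredB; [apply: dvdz_mulr | apply: dvdz_mull; apply: dvdz_mulr].
Qed.

Lemma notdiv K x k w : isO w -> (forall n, ~~ (2 %| normZ (ev K w n))%Z) ->
  eqO x (mulO K (expO K (piO K) k) w) -> ~ ord_ge K x k.+1.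
Proof.
move=> hw hN hx [y [hy hxy]].
have := (eqOE K _ _).1 (eqO_trans K (eqO_sym K hx) hxy) k.+1.
rewrite !evE; set W := ev K w k.+1; set Yv := ev K y k.+1 => h.
have hpk : pcC K ^+ k * piC K ^+ k = sc K (2 ^+ k) * sc K (tK K ^+ k).
  by rewrite mulrC -exprMn pi_pc -scX exprMn scM.
have h' : D2 (k + 1) (sc K (2 ^+ k) * (sc K (tK K ^+ k) * (W - piC K * Yv))).
  rewrite mulrA -hpk addn1.
  have -> : pcC K ^+ k * piC K ^+ k * (W - piC K * Yv) =
    pcC K ^+ k * (piC K ^+ k * W - piC K ^+ k.+1 * Yv) by rewrite exprS; ring.
  exact: D2Ml.
have := D2_norm (D2_sc_inv h'); rewrite normM normsc normB normM normpi.
have := oddX k (tK_odd K); have := hN k.+1; rewrite -/W.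
set T := tK K ^+ k; set A := normZ W; set B := normZ Yv; set C := (_ * _ - _).
move=> hA hT h2.
have : ~~ (2 %| T * T * (A + 2 * tK K * B - 2 * C))%Z.
  apply: oddM; first by apply: oddM.
  by move: hA; clear; lia.
by rewrite h2.
Qed.

Lemma norm_1pi K (z : ZD K) : ~~ (2 %| normZ (1 + piC K * z))%Z.
Proof.
have -> : 1 + piC K * z = 1 - (- (piC K * z)) by rewrite opprK.
rewrite normB norm1.
have -> : normZ (- (piC K * z)) = normZ (piC K * z).
  by rewrite /normZ /= !sqrrN.
rewrite normM normpi; set B := normZ z; set C := (_ * _ - _); lia.
Qed.

Definition redz K s (z : ZD K) : ZD K := ((z.1 %% 2 ^+ s)%Z, (z.2 %% 2 ^+ s)%Z).
Lemma D2_red K s (z : ZD K) : D2 s (z - redz s z).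
Proof.
case: z => a b; rewrite /D2 /redz /= {1}(divz_eq a (2 ^+ s)) {1}(divz_eq b (2 ^+ s)).
by rewrite !addrK !dvdz_mull.
Qed.

Definition goodb K k j (T P1 P2 b1 b2 : ZD K) : bool :=
  D2 (k + j) (pcC K ^+ (k + j) * (P1 * b1 ^+ 2 + P2 * b2 ^+ 2 - piC K ^+ k * T)).

Lemma powd K m (b : ZD K) : odd m -> D2 2 (b ^+ 4 - 1) -> D2 2 (b ^+ (2 * m) - b ^+ 2).
Proof.
move=> hm hb.
have -> : (2 * m = 2 + 4 * m./2)%N.
  by rewrite -{1}(odd_double_half m) hm -muln2; lia.
rewrite exprD exprM.
have -> : b ^+ 2 * (b ^+ 4) ^+ m./2 - b ^+ 2 = b ^+ 2 * ((b ^+ 4) ^+ m./2 - 1) by ring.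
by apply: D2Ml; apply: D2_pow1.
Qed.

Definition cO K (z : ZD K) : Oseq := constO z.1 z.2.
Lemma evcO K z n : ev K (cO z) n = z. Proof. by case: z. Qed.
Lemma isO_cO K (z : ZD K) : isO (cO z). Proof. exact: isO_const. Qed.

Lemma master K m r k j (T : ZD K) a1 a2 u1 u2 Y1 Y2 (P1 P2 b1 b2 : ZD K) :
  odd m -> (2 < k + j)%N -> isO a1 -> isO a2 -> isO u1 -> isO u2 -> isO Y1 -> isO Y2 ->
  eqO a1 (mulO K (expO K (piO K) r) u1) -> eqO a2 (mulO K (expO K (piO K) r) u2) ->
  (forall n, D2 n (ev K u1 n - P1 - piC K ^+ 4 * ev K Y1 n)) ->
  (forall n, D2 n (ev K u2 n - P2 - piC K ^+ 4 * ev K Y2 n)) ->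
  D2 (k + j) (pcC K ^+ (k + j) * sc K (2 ^+ 2)) -> D2 2 (piC K ^+ 4) ->
  D2 2 (b1 ^+ 4 - 1) -> D2 2 (b2 ^+ 4 - 1) ->
  @goodb K k j T P1 P2 b1 b2 ->
  exists y, isO y /\ eqO (binform K (2 * m) a1 (cO b1) a2 (cO b2))
    (mulO K (expO K (piO K) (r + k)) (addO (cO T) (mulO K (expO K (piO K) j) y))).
Proof.
move=> hm hs ha1 ha2 hu1 hu2 hY1 hY2 hau1 hau2 hP1 hP2 h4 hpi4 hb1 hb2 hz.
set s := (k + j)%N in hs hz h4.
set B1 := b1 ^+ (2 * m); set B2 := b2 ^+ (2 * m).
set X := subO (addO (mulO K u1 (cO B1)) (mulO K u2 (cO B2))) (mulO K (expO K (piO K) k) (cO T)).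
have hX : isO X.
  apply: isO_sub; first by apply: isO_add; apply: isO_mul => //; apply: isO_cO.
  by apply: isO_mul; [apply: isO_exp; apply: isO_pi | apply: isO_cO].
have hc : forall n, D2 s (pcC K ^+ s * ev K X (n + s)).
  move=> n; set N := (n + s)%N.
  have hN : (2 <= N)%N by rewrite /N; lia.
  set z := P1 * b1 ^+ 2 + P2 * b2 ^+ 2 - piC K ^+ k * T.
  set q := (ev K u1 N - P1 - piC K ^+ 4 * ev K Y1 N) * B1 + piC K ^+ 4 * (ev K Y1 N * B1)
         + P1 * (B1 - b1 ^+ 2)
         + ((ev K u2 N - P2 - piC K ^+ 4 * ev K Y2 N) * B2 + piC K ^+ 4 * (ev K Y2 N * B2)
         + P2 * (B2 - b2 ^+ 2)).
  have hq : D2 2 q.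
    have hb1' := powd hm hb1; have hb2' := powd hm hb2.
    apply: D2D; (apply: D2D; [apply: D2D|]).
    all: try (by apply: D2Mr; apply: D2_le (hP1 N)).
    all: try (by apply: D2Mr; apply: D2_le (hP2 N)).
    all: try (by apply: D2Mr).
    - by apply: D2Ml; exact: hb1'.
    - by apply: D2Ml; exact: hb2'.
  have -> : ev K X N = z + sc K (2 ^+ 2) * halfs 2 q.
    rewrite halfsK // /X !evB !evA !evM !evcO !evX !evpi /z /q; ring.
  rewrite mulrDr; apply: D2D; last by rewrite mulrA; apply: D2Mr.
  exact: hz.
have [hy hXy] := divO_spec hX hc.
exists (divO K s X); split => //.
apply/(eqOE K) => n.
move/(eqOE K): hau1 => /(_ n); move/(eqOE K): hau2 => /(_ n); move/(eqOE K): hXy => /(_ n).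
rewrite /binform /X ?(evB, evA, evM, evX, evpi, evcO) => h3 h2 h1.
set Y := ev K (divO _ _ _) n.
rewrite /s [piC K ^+ (r + k)]exprD.
have -> : ev K a1 n * B1 + ev K a2 n * B2 -
   piC K ^+ r * piC K ^+ k * (T + piC K ^+ j * Y) =
   (ev K a1 n - piC K ^+ r * ev K u1 n) * B1 + (ev K a2 n - piC K ^+ r * ev K u2 n) * B2
   + piC K ^+ r * (ev K u1 n * B1 + ev K u2 n * B2 - piC K ^+ k * T - piC K ^+ k * piC K ^+ j * Y)
   by ring.
move: h3; rewrite /s [piC K ^+ (k + j)]exprD => h3.
by apply: D2D; [apply: D2D; apply: D2Mr|apply: D2Ml].
Qed.

Definition fopp (m : int) : int :=
  match m with Posz n => if n is n'.+1 then Negz n' else Posz 0 | Negz n => Posz n.+1 end.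
Definition fadd := intZmod.addz.
Definition fmul (m n : int) : int := match m, n with
    | Posz m', Posz n' => Posz (m' * n')
    | Negz m', Negz n' => Posz (m'.+1 * n'.+1)
    | Posz m', Negz n' => fopp (Posz (m' * (n'.+1)))
    | Negz n', Posz m' => fopp (Posz (m' * (n'.+1))) end.
Definition zmulF K (x y : ZD K) : ZD K :=
  (fadd (fmul x.1 y.1) (fmul (radicand K) (fmul x.2 y.2)), fadd (fmul x.1 y.2) (fmul x.2 y.1)).
Definition zaddF K (x y : ZD K) : ZD K := (fadd x.1 y.1, fadd x.2 y.2).
Definition zoppF K (x : ZD K) : ZD K := (fopp x.1, fopp x.2).
Definition zexpF K (x : ZD K) n := iterop n (@zmulF K) x ((1 : int), (0 : int)).
Definition iexpF (x : int) n := iterop n fmul x (1 : int).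
Definition D2F K n (z : ZD K) := (iexpF 2 n %| z.1)%Z && (iexpF 2 n %| z.2)%Z.
Definition goodbF K k j (T P1 P2 b1 b2 : ZD K) : bool :=
  D2F (k + j) (zmulF (zexpF (pcC K) (k + j))
    (zaddF (zaddF (zmulF P1 (zexpF b1 2)) (zmulF P2 (zexpF b2 2)))
           (zoppF (zmulF (zexpF (piC K) k) T)))).
Lemma goodbE K k j (T P1 P2 b1 b2 : ZD K) : goodbF k j T P1 P2 b1 b2 = goodb k j T P1 P2 b1 b2.
Proof. reflexivity. Qed.

Definition cf (t : bool * bool * bool) : nat -> bool := fun k =>
  match k with 0 => true | 1 => t.1.1 | 2 => t.1.2 | 3 => t.2 | _ => false end.
Definition PZ K t : ZD K := ev K (psumO K (cf t) 4) 0.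
Definition dZF K (b : bool) : ZD K := if b then (1, 0) else (0, 0).
Definition PZF K t : ZD K :=
  foldr (fun k acc => zaddF (zmulF (dZF K (cf t k)) (iter k (zmulF (piC K)) (1, 0))) acc)
    (0, 0) (iota 0 4).
Lemma PZE K t : PZF K t = PZ K t.
Proof. by case: K; case: t => [[[] []] []]; vm_compute. Qed.

Definition bl K : seq (ZD K) :=
  match K with Q2sqrtm1 | Q2sqrtm5 => [:: (1, 0); (0, 1)] | _ => [:: (1, 0); (1, 1)] end.
Definition blp K := [seq (x, y) | x <- bl K, y <- bl K].
Definition good2 K k j (T : ZD K) t1 t2 :=
  has (fun bb : ZD K * ZD K => goodb k j T (PZ K t1) (PZ K t2) bb.1 bb.2) (blp K).
Definition good2F K k j (T : ZD K) t1 t2 :=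
  let P1 := PZF K t1 in let P2 := PZF K t2 in
  has (fun bb : ZD K * ZD K => goodbF k j T P1 P2 bb.1 bb.2) (blp K).
Arguments good2 : clear implicits.
Arguments good2F : clear implicits.
Lemma good2E K k j T t1 t2 : good2F K k j T t1 t2 = good2 K k j T t1 t2.
Proof. by rewrite /good2F /good2 !PZE; apply: eq_has => bb; rewrite goodbE. Qed.

Definition Tpair K (e : bool) : ZD K := 1 + dZ K e * piC K.
Definition TpairF K (e : bool) : ZD K := if e then zaddF (1, 0) (piC K) else (1, 0).
Lemma TpairE K e : TpairF K e = Tpair K e.
Proof. by case: e; rewrite /TpairF /Tpair /dZ ?mul1r ?mul0r ?addr0. Qed.
Definition bools := [:: true; false].
Definition dl := [:: (true, true); (true, false); (false, true); (false, false)].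

Definition chk1 K := all (fun c => all (fun e => all (fun x => all (fun y =>
  good2F K 1 2 (TpairF K e) (c, x.1, x.2) (~~ c, y.1, y.2)) dl) dl) bools) bools.
Definition chk2 K := all (fun c => all (fun x => all (fun y =>
  good2F K 2 1 (1, 0) (c, x.1, x.2) (c, y.1, y.2)) dl) dl) bools.
Definition chk3 K := all (fun c => all (fun x => all (fun y =>
  good2F K 3 0 (0, 0) (c, x.1, x.2) (c, y.1, y.2)) dl) dl) bools.
Definition chk4 K := all (fun c => all (fun x => all (fun y => all (fun z =>
  [|| good2F K 4 0 (0, 0) (c, x.1, x.2) (c, y.1, y.2),
      good2F K 4 0 (0, 0) (c, x.1, x.2) (c, z.1, z.2) |
      good2F K 4 0 (0, 0) (c, y.1, y.2) (c, z.1, z.2)]) dl) dl) dl) bools.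
Definition chk5 K := all (fun c => all (fun x => all (fun y => all (fun z =>
  [|| good2F K 2 2 (TpairF K c) (c, x.1, x.2) (c, y.1, y.2),
      good2F K 2 2 (TpairF K c) (c, x.1, x.2) (c, z.1, z.2) |
      good2F K 2 2 (TpairF K c) (c, y.1, y.2) (c, z.1, z.2)]) dl) dl) dl) bools.

Lemma chk1_ok K : chk1 K. Proof. by case: K; vm_compute. Qed.
Lemma chk2_ok K : chk2 K. Proof. by case: K; vm_compute. Qed.
Lemma chk3_ok K : chk3 K. Proof. by case: K; vm_compute. Qed.
Lemma chk4_ok K : K = Q2sqrtm1 \/ K = Q2sqrtm5 -> chk4 K.
Proof. by case=> ->; vm_compute. Qed.
Lemma chk5_ok K : K = Q2sqrt2 \/ K = Q2sqrt10 \/ K = Q2sqrtm2 \/ K = Q2sqrtm10 -> chk5 K.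
Proof. by case=> [->|[->|[->|->]]]; vm_compute. Qed.

Lemma Kconst K : [&& D2 3 (pcC K ^+ 3 * sc K (2 ^+ 2)), D2 4 (pcC K ^+ 4 * sc K (2 ^+ 2))
  & D2 2 (piC K ^+ 4)].
Proof. by case: K; vm_compute. Qed.

Lemma bl_ok K b : b \in bl K -> D2 2 (b ^+ 4 - 1) && ~~ (2 %| normZ b)%Z.
Proof. by case: K b => b; rewrite /= !inE => /orP[] /eqP ->; vm_compute. Qed.

Lemma psum4 K c n : c 0%N = true -> ev K (psumO K c 4) n = PZ K (c 1%N, c 2%N, c 3%N).
Proof.
move=> h0; rewrite /PZ !psumE; apply: eq_big_nat => i /andP[_ hi].
case: i hi => [|[|[|[|i]]]] hi //=; by rewrite h0.
Qed.

Lemma getdig K u c : isO u -> pi_coeff K u c ->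
  exists x2 x3 Y, isO Y /\ forall n, D2 n (ev K u n - PZ K (c, x2, x3) - piC K ^+ 4 * ev K Y n).
Proof.
move=> hu [cc [h0 [h1 hN]]]; have [Y [hY hE]] := hN 4%N.
exists (cc 2%N), (cc 3%N), Y; split => // n.
by move/(eqOE K): hE => /(_ n); rewrite evB evM evX evpi psum4 // h1.
Qed.

Lemma pairlem K m r k j (T : ZD K) a1 a2 u1 u2 t1 t2 Y1 Y2 :
  odd m -> (2 < k + j)%N -> (k + j <= 4)%N ->
  isO a1 -> isO a2 -> isO u1 -> isO u2 -> isO Y1 -> isO Y2 ->
  eqO a1 (mulO K (expO K (piO K) r) u1) -> eqO a2 (mulO K (expO K (piO K) r) u2) ->
  (forall n, D2 n (ev K u1 n - PZ K t1 - piC K ^+ 4 * ev K Y1 n)) ->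
  (forall n, D2 n (ev K u2 n - PZ K t2 - piC K ^+ 4 * ev K Y2 n)) ->
  good2 K k j T t1 t2 ->
  exists (b1 b2 : ZD K) y, unitO K (cO b1) /\ unitO K (cO b2) /\ isO y /\
    eqO (binform K (2 * m) a1 (cO b1) a2 (cO b2))
      (mulO K (expO K (piO K) (r + k)) (addO (cO T) (mulO K (expO K (piO K) j) y))).
Proof.
move=> hm hs1 hs2 ha1 ha2 hu1 hu2 hY1 hY2 he1 he2 hD1 hD2 /hasP [[b1 b2] hin hg].
case/allpairsP: hin => [[x y] [hx hy [ex ey]]]; subst x y.
have /andP [hb1 hn1] := bl_ok hx; have /andP [hb2 hn2] := bl_ok hy.
have /and3P [hK3 hK4 hpi] := Kconst K.
have hK : D2 (k + j) (pcC K ^+ (k + j) * sc K (2 ^+ 2)).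
  have hkj : (k + j = 3 \/ k + j = 4)%N by lia.
  by case: hkj => ->.
have [yy [hyy hE]] := master hm hs1 ha1 ha2 hu1 hu2 hY1 hY2 he1 he2 hD1 hD2 hK hpi hb1 hb2 hg.
exists b1, b2, yy; split; [|split => //].
  by apply: unit_of; [apply: isO_cO | move=> n; rewrite evcO].
by apply: unit_of; [apply: isO_cO | move=> n; rewrite evcO].
Qed.

Lemma unit_1pi K w z : isO w -> (forall n, ev K w n = 1 + piC K * ev K z n) -> unitO K w.
Proof. by move=> hw h; apply: unit_of => // n; rewrite h norm_1pi. Qed.

Lemma memb b : b \in bools. Proof. by case: b. Qed.
Lemma memd p : p \in dl. Proof. by case: p => [[] []]. Qed.

Lemma wform K e y n :
  ev K (addO (cO (Tpair K e)) (mulO K (expO K (piO K) 2) y)) n =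
  1 + piC K * ev K (addO (digitO e) (mulO K (piO K) y)) n.
Proof. rewrite evA evcO !evE /Tpair /dZ; case: e; ring. Qed.

Lemma isO_w K (T : ZD K) j y : isO y -> isO (addO (cO T) (mulO K (expO K (piO K) j) y)).
Proof.
move=> hy; apply: isO_add; first exact: isO_cO.
by apply: isO_mul => //; apply: isO_exp; apply: isO_pi.
Qed.

Lemma p4pair K m r (a u : 'I_3 -> Oseq) (i j : 'I_3) ti tj Yi Yj :
  odd m -> i != j -> (forall i, isO (a i)) -> (forall i, isO (u i)) -> isO Yi -> isO Yj ->
  (forall i, eqO (a i) (mulO K (expO K (piO K) r) (u i))) ->
  (forall n, D2 n (ev K (u i) n - PZ K ti - piC K ^+ 4 * ev K Yi n)) ->
  (forall n, D2 n (ev K (u j) n - PZ K tj - piC K ^+ 4 * ev K Yj n)) ->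
  good2 K 4 0 0 ti tj ->
  exists (i j : 'I_3) (bi bj : Oseq), i != j /\ unitO K bi /\ unitO K bj /\
    ord_ge K (binform K (2 * m) (a i) bi (a j) bj) (r + 4).
Proof.
move=> hm hij ha hu hYi hYj he hDi hDj hg.
have [b1 [b2 [y [hb1 [hb2 [hy hE]]]]]] :=
  pairlem hm (isT : (2 < 4 + 0)%N) (isT : (4 + 0 <= 4)%N) (ha i) (ha j) (hu i) (hu j)
    hYi hYj (he i) (he j) hDi hDj hg.
exists i, j, (cO b1), (cO b2); split => //; split => //; split => //.
by exists (addO (cO (0 : ZD K)) (mulO K (expO K (piO K) 0) y)); split => //; apply: isO_w.
Qed.

Lemma p5pair K m r (a u : 'I_3 -> Oseq) (c : bool) (i j : 'I_3) ti tj Yi Yj :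
  odd m -> i != j -> (forall i, isO (a i)) -> (forall i, isO (u i)) -> isO Yi -> isO Yj ->
  (forall i, eqO (a i) (mulO K (expO K (piO K) r) (u i))) ->
  (forall n, D2 n (ev K (u i) n - PZ K ti - piC K ^+ 4 * ev K Yi n)) ->
  (forall n, D2 n (ev K (u j) n - PZ K tj - piC K ^+ 4 * ev K Yj n)) ->
  good2 K 2 2 (Tpair K c) ti tj ->
  exists (i j : 'I_3) (bi bj w : Oseq), i != j /\ unitO K bi /\ unitO K bj /\
    unitO K w /\ pi_coeff K w c /\
    eqO (binform K (2 * m) (a i) bi (a j) bj) (mulO K (expO K (piO K) (r + 2)) w).
Proof.
move=> hm hij ha hu hYi hYj he hDi hDj hg.
have [b1 [b2 [y [hb1 [hb2 [hy hE]]]]]] :=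
  pairlem hm (isT : (2 < 2 + 2)%N) (isT : (2 + 2 <= 4)%N) (ha i) (ha j) (hu i) (hu j)
    hYi hYj (he i) (he j) hDi hDj hg.
exists i, j, (cO b1), (cO b2), (addO (cO (Tpair K c)) (mulO K (expO K (piO K) 2) y)).
split => //; split => //; split => //; split; [|split] => //.
  by apply: (unit_1pi (z := addO (digitO c) (mulO K (piO K) y))); [apply: isO_w | apply: wform].
apply: (pi_coeff_of (Y := y)) => //; first exact: isO_w.
by apply: (eqO_pt (K := K)) => n; rewrite wform !evE.
Qed.

Unset Implicit Arguments.

Theorem lemma2 (K : ramK) (m r : nat) (Hodd : odd m) (Hm : (3 <= m)%N) :
  let d := (2 * m)%N in
  let pi := piO K in
  (* (1) *)
  (forall a1 a2 u1 u2 : Oseq,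
      isO a1 -> isO a2 -> unitO K u1 -> unitO K u2 ->
      eqO a1 (mulO K (expO K pi r) u1) -> eqO a2 (mulO K (expO K pi r) u2) ->
      (exists c1 c2 : bool, pi_coeff K u1 c1 /\ pi_coeff K u2 c2 /\ c1 != c2) ->
      forall e : bool, exists b1 b2 w : Oseq,
        unitO K b1 /\ unitO K b2 /\ unitO K w /\ pi_coeff K w e /\
        eqO (binform K d a1 b1 a2 b2) (mulO K (expO K pi r.+1) w)) /\
  (* (2) *)
  (forall a1 a2 u1 u2 : Oseq,
      isO a1 -> isO a2 -> unitO K u1 -> unitO K u2 ->
      eqO a1 (mulO K (expO K pi r) u1) -> eqO a2 (mulO K (expO K pi r) u2) ->
      (exists c : bool, pi_coeff K u1 c /\ pi_coeff K u2 c) ->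
      exists b1 b2 : Oseq, unitO K b1 /\ unitO K b2 /\
        ord_eq K (binform K d a1 b1 a2 b2) (r + 2)) /\
  (* (3) *)
  (forall a1 a2 u1 u2 : Oseq,
      isO a1 -> isO a2 -> unitO K u1 -> unitO K u2 ->
      eqO a1 (mulO K (expO K pi r) u1) -> eqO a2 (mulO K (expO K pi r) u2) ->
      (exists c : bool, pi_coeff K u1 c /\ pi_coeff K u2 c) ->
      exists b1 b2 : Oseq, unitO K b1 /\ unitO K b2 /\
        ord_ge K (binform K d a1 b1 a2 b2) (r + 3)) /\
  (* (4) *)
  ((K = Q2sqrtm1 \/ K = Q2sqrtm5) ->
   forall a u : 'I_3 -> Oseq,
      (forall i, isO (a i)) -> (forall i, unitO K (u i)) ->
      (forall i, eqO (a i) (mulO K (expO K pi r) (u i))) ->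
      (exists c : bool, forall i, pi_coeff K (u i) c) ->
      exists (i j : 'I_3) (bi bj : Oseq), i != j /\ unitO K bi /\ unitO K bj /\
        ord_ge K (binform K d (a i) bi (a j) bj) (r + 4)) /\
  (* (5) *)
  ((K = Q2sqrt2 \/ K = Q2sqrt10 \/ K = Q2sqrtm2 \/ K = Q2sqrtm10) ->
   forall (a u : 'I_3 -> Oseq) (c : bool),
      (forall i, isO (a i)) -> (forall i, unitO K (u i)) ->
      (forall i, eqO (a i) (mulO K (expO K pi r) (u i))) ->
      (forall i, pi_coeff K (u i) c) ->
      exists (i j : 'I_3) (bi bj w : Oseq), i != j /\ unitO K bi /\ unitO K bj /\
        unitO K w /\ pi_coeff K w c /\
        eqO (binform K d (a i) bi (a j) bj) (mulO K (expO K pi (r + 2)) w)).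
Proof.
move=> d pi; rewrite {}/d {}/pi.
split; [|split; [|split; [|split]]].
- move=> a1 a2 u1 u2 ha1 ha2 [hu1 _] [hu2 _] he1 he2 [c1 [c2 [hp1 [hp2 hne]]]] e.
  have [x2 [x3 [Y1 [hY1 hD1]]]] := getdig hu1 hp1.
  have [x2' [x3' [Y2 [hY2 hD2]]]] := getdig hu2 hp2.
  have hc2 : c2 = ~~ c1 by move: hne; clear; case: c1; case: c2.
  have hg : good2 K 1 2 (Tpair K e) (c1, x2, x3) (c2, x2', x3').
    rewrite -good2E -TpairE hc2.
    by have := chk1_ok K; move/allP/(_ c1 (memb c1))/allP/(_ e (memb e))/allP/(_ (x2, x3) (memd _))/allP/(_ (x2', x3') (memd _)).
  have [b1 [b2 [y [hb1 [hb2 [hy hE]]]]]] :=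
    pairlem Hodd (isT : (2 < 1 + 2)%N) (isT : (1 + 2 <= 4)%N) ha1 ha2 hu1 hu2 hY1 hY2 he1 he2 hD1 hD2 hg.
  exists (cO b1), (cO b2), (addO (cO (Tpair K e)) (mulO K (expO K (piO K) 2) y)).
  split => //; split => //; split; [|split].
  + by apply: (unit_1pi (z := addO (digitO e) (mulO K (piO K) y))); [apply: isO_w | apply: wform].
  + apply: (pi_coeff_of (Y := y)) => //; first exact: isO_w.
    by apply: (eqO_pt (K := K)) => n; rewrite wform !evE.
  + by move: hE; rewrite addn1.
- move=> a1 a2 u1 u2 ha1 ha2 [hu1 _] [hu2 _] he1 he2 [c [hp1 hp2]].
  have [x2 [x3 [Y1 [hY1 hD1]]]] := getdig hu1 hp1.
  have [x2' [x3' [Y2 [hY2 hD2]]]] := getdig hu2 hp2.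
  have hg : good2 K 2 1 1 (c, x2, x3) (c, x2', x3').
    rewrite -good2E.
    by have := chk2_ok K; move/allP/(_ c (memb c))/allP/(_ (x2, x3) (memd _))/allP/(_ (x2', x3') (memd _)).
  have [b1 [b2 [y [hb1 [hb2 [hy hE]]]]]] :=
    pairlem Hodd (isT : (2 < 2 + 1)%N) (isT : (2 + 1 <= 4)%N) ha1 ha2 hu1 hu2 hY1 hY2 he1 he2 hD1 hD2 hg.
  exists (cO b1), (cO b2); split => //; split => //; split.
    by exists (addO (cO (1 : ZD K)) (mulO K (expO K (piO K) 1) y)); split => //; apply: isO_w.
  apply: (notdiv (w := addO (cO (1 : ZD K)) (mulO K (expO K (piO K) 1) y))) => //.
    exact: isO_w.
  by move=> n; rewrite evA evcO evM evX evpi expr1 norm_1pi.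
- move=> a1 a2 u1 u2 ha1 ha2 [hu1 _] [hu2 _] he1 he2 [c [hp1 hp2]].
  have [x2 [x3 [Y1 [hY1 hD1]]]] := getdig hu1 hp1.
  have [x2' [x3' [Y2 [hY2 hD2]]]] := getdig hu2 hp2.
  have hg : good2 K 3 0 0 (c, x2, x3) (c, x2', x3').
    rewrite -good2E.
    by have := chk3_ok K; move/allP/(_ c (memb c))/allP/(_ (x2, x3) (memd _))/allP/(_ (x2', x3') (memd _)).
  have [b1 [b2 [y [hb1 [hb2 [hy hE]]]]]] :=
    pairlem Hodd (isT : (2 < 3 + 0)%N) (isT : (3 + 0 <= 4)%N) ha1 ha2 hu1 hu2 hY1 hY2 he1 he2 hD1 hD2 hg.
  exists (cO b1), (cO b2); split => //; split => //.
  by exists (addO (cO (0 : ZD K)) (mulO K (expO K (piO K) 0) y)); split => //; apply: isO_w.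
- move=> hK a u ha hu he [c hp].
  have hu' : forall i, isO (u i) by move=> i; case: (hu i).
  pose i0 : 'I_3 := @Ordinal 3 0 isT; pose i1 : 'I_3 := @Ordinal 3 1 isT.
  pose i2 : 'I_3 := @Ordinal 3 2 isT.
  have [x0 [y0 [Z0 [hZ0 hD0]]]] := getdig (hu' i0) (hp i0).
  have [x1 [y1 [Z1 [hZ1 hD1]]]] := getdig (hu' i1) (hp i1).
  have [x2 [y2 [Z2 [hZ2 hD2]]]] := getdig (hu' i2) (hp i2).
  have := chk4_ok hK; move/allP/(_ c (memb c))/allP/(_ (x0, y0) (memd _)).
  move/allP/(_ (x1, y1) (memd _))/allP/(_ (x2, y2) (memd _)).
  case/or3P; rewrite good2E => h.
  - exact: (p4pair (i := i0) (j := i1) Hodd isT ha hu' hZ0 hZ1 he hD0 hD1 h).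
  - exact: (p4pair (i := i0) (j := i2) Hodd isT ha hu' hZ0 hZ2 he hD0 hD2 h).
  - exact: (p4pair (i := i1) (j := i2) Hodd isT ha hu' hZ1 hZ2 he hD1 hD2 h).
- move=> hK a u c ha hu he hp.
  have hu' : forall i, isO (u i) by move=> i; case: (hu i).
  pose i0 : 'I_3 := @Ordinal 3 0 isT; pose i1 : 'I_3 := @Ordinal 3 1 isT.
  pose i2 : 'I_3 := @Ordinal 3 2 isT.
  have [x0 [y0 [Z0 [hZ0 hD0]]]] := getdig (hu' i0) (hp i0).
  have [x1 [y1 [Z1 [hZ1 hD1]]]] := getdig (hu' i1) (hp i1).
  have [x2 [y2 [Z2 [hZ2 hD2]]]] := getdig (hu' i2) (hp i2).
  have := chk5_ok hK; move/allP/(_ c (memb c))/allP/(_ (x0, y0) (memd _)).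
  move/allP/(_ (x1, y1) (memd _))/allP/(_ (x2, y2) (memd _)).
  case/or3P; rewrite good2E TpairE => h.
  - exact: (p5pair (i := i0) (j := i1) Hodd isT ha hu' hZ0 hZ1 he hD0 hD1 h).
  - exact: (p5pair (i := i0) (j := i2) Hodd isT ha hu' hZ0 hZ2 he hD0 hD2 h).
  - exact: (p5pair (i := i1) (j := i2) Hodd isT ha hu' hZ1 hZ2 he hD1 hD2 h).
Qed.
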